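(* Let $\Pi$ be a Klein tableau with entries at most $2$, encoded as $\Pi=[\gamma;\zeta=\beta^0;\beta^1,\ldots,\beta^s=\beta]$. Define $$x(\Pi)=\sum_j\big(\bar\zeta_j-\bar\gamma_j+|\beta^{j-1}|-|\beta^j|\big)\sum_{k>j}\big(\bar\beta^{j-1}_k-\bar\zeta_k\big)+\sum_j\sum_{\ell>j}\big(\bar\beta^j_{\ell+1}-\bar\beta^{j-1}_{\ell+1}\big)\sum_{k=j+1}^{\ell}\big(\bar\beta^{j-1}_k-\bar\zeta_k\big).$$ Then $x(\Pi)$ equals the number $x(\Delta)$ of crossings in the arc diagram $\Delta$ of $\Pi$.
   Context: For a partition $\lambda$ the Young diagram has columns of lengths $\lambda_1,\lambda_2,\ldots$; rows numbered from the top starting at $1$; $\bar\lambda$ is the conjugate partition so $\bar\lambda_k$ is the number of boxes in row $k$; $|\lambda|=\sum_i\lambda_i$. An LR-tableau of type $(\alpha,\beta,\gamma)$ with entries at most $2$ is a filling of the skew diagram $\beta\setminus\gamma$ with $\bar\alpha_1$ entries $1$ and $\bar\alpha_2$ entries $2$, weakly increasing along rows, strictly increasing down columns, and such that for each $c\ge0$ the number of entries $2$ in columns to the right of column $c$ is at most the number of entries $1$ there. A Klein tableau is such an LR-tableau in which each entry $2$ carries a subscript $r$ ($2_r$) with: (a) if $2_r$ is in row $m$ then $1\le r\le m-1$; (b) if $2_r$ is in row $m$ and the box above it contains $1$ then $r=m-1$; (c) the number of entries $2_r$ is at most the number of entries $1$ in row $r$. The encoding $[\gamma;\zeta;\beta^1,\dots,\beta^s]$: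 $\gamma$ is the shape of the empty boxes, $\zeta=\beta^0$ the shape formed by the empty boxes and the boxes $1$, and $\beta^j$ the shape formed by the empty boxes, the boxes $1$ and the boxes $2_i$ with $i\le j$. The arc diagram $\Delta$ of $\Pi$ is the multiset consisting of an arc $(m,r)$ for each entry $2_r$ in row $m$, together with, at each position $r$, as many poles as the number of entries $1$ in row $r$ minus the number of arcs ending at $r$. The number of crossings $x(\Delta)$ is the number (with multiplicity) of pairs of arcs $(m,r),(n,s)$ with $m>n>r>s$ plus the number of pairs (arc $(m,s)$, pole at $r$) with $m>r>s$. *)

(* Defs.v *)
From mathcomp Require Import all_boot all_algebra.
Set Implicit Arguments.
Unset Strict Implicit.
Unset Printing Implicit Defensive.
Import GRing.Theory Num.Theory.

(* Conventions (as in the paper): a partition [l : seq nat] lists the COLUMN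
   lengths l_1 >= l_2 >= ...; rows and columns are numbered from 1;
   box (m, c) = (row m, column c) lies in l iff m <= l_c. *)

Definition col (l : seq nat) (c : nat) : nat := nth 0 l c.-1.
Definition rowlen (l : seq nat) (k : nat) : nat := count (fun x => k <= x) l.
Definition is_partition (l : seq nat) : bool := sorted geq l.
Definition nrows (l : seq nat) : nat := foldr maxn 0 l.
Definition rows (l : seq nat) : seq nat := iota 1 (nrows l).
Definition cols (l : seq nat) : seq nat := iota 1 (size l).

(* entries of a Klein tableau with entries at most 2: 1, or 2_r *)
Inductive kentry := KOne | KTwo of nat.
Definition kval (e : kentry) : nat := match e with KOne => 1 | KTwo _ => 2 end.
Definition is_one (e : kentry) : bool := if e is KOne then true else false.
Definition is_two (e : kentry) : bool := if e is KTwo _ then true else false.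
Definition is_two_with (r : nat) (e : kentry) : bool :=
  if e is KTwo i then i == r else false.
Definition is_two_le (j : nat) (e : kentry) : bool :=
  if e is KTwo i then i <= j else false.
Definition two_sub (e : kentry) : nat := if e is KTwo r then r else 0.

Section Tab.
Variables (beta gamma : seq nat) (T : nat -> nat -> kentry).

Definition in_skew (m c : nat) : bool :=
  [&& 0 < c, col gamma c < m & m <= col beta c].

Definition skew_boxes : seq (nat * nat) :=
  [seq p <- [seq (m, c) | m <- rows beta, c <- cols beta] | in_skew p.1 p.2].

Definition ones_row (m : nat) : nat :=
  count (fun c => in_skew m c && is_one (T m c)) (cols beta).

(* LR-tableau of type (alpha, beta, gamma) with entries at most 2
   (alpha is determined by the numbers of entries 1 and 2). *)
Definition is_LR2 : Prop :=
  [/\ [/\ is_partition beta, is_partition gamma &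
          (forall c, col gamma c <= col beta c)],
      (forall m c c', c < c' -> in_skew m c -> in_skew m c' ->
                      kval (T m c) <= kval (T m c')),
      (forall m m' c, m < m' -> in_skew m c -> in_skew m' c ->
                      kval (T m c) < kval (T m' c)) &
      (forall c0 : nat,
         count (fun p => (c0 < p.2) && is_two (T p.1 p.2)) skew_boxes
         <= count (fun p => (c0 < p.2) && is_one (T p.1 p.2)) skew_boxes)].

Definition is_Klein : Prop :=
  [/\ is_LR2,
      (* (a) *)
      (forall m c r, in_skew m c -> T m c = KTwo r -> 1 <= r <= m.-1),
      (* (b) *)
      (forall m c r, in_skew m c -> T m c = KTwo r ->
                     in_skew m.-1 c -> T m.-1 c = KOne -> r = m.-1) &
      (* (c) *)
      (forall r, count (fun p => is_two_with r (T p.1 p.2)) skew_boxes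
                 <= ones_row r)].

(* row lengths of beta^j: empty boxes, boxes 1, boxes 2_i with i <= j *)
Definition bbar (j k : nat) : nat :=
  rowlen gamma k + ones_row k
  + count (fun c => in_skew k c && is_two_le j (T k c)) (cols beta).
Definition zbar (k : nat) : nat := bbar 0 k.
Definition size_b (j : nat) : nat := \sum_(k <- rows beta) bbar j k.

Definition xPi : int :=
  \sum_(j <- rows beta)
     ((zbar j)%:Z - (rowlen gamma j)%:Z + (size_b j.-1)%:Z - (size_b j)%:Z)
     * \sum_(k <- rows beta | (j < k)%N) ((bbar j.-1 k)%:Z - (zbar k)%:Z)
  + \sum_(j <- rows beta) \sum_(l <- rows beta | (j < l)%N)
     ((bbar j l.+1)%:Z - (bbar j.-1 l.+1)%:Z)
     * \sum_(k <- rows beta | (j < k < l.+1)%N)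
          ((bbar j.-1 k)%:Z - (zbar k)%:Z).

(* arc diagram: an arc (m, r) for each entry 2_r in row m (multiset) *)
Definition arcs : seq (nat * nat) :=
  [seq (p.1, two_sub (T p.1 p.2)) | p <- skew_boxes & is_two (T p.1 p.2)].

Definition poles (r : nat) : nat :=
  ones_row r - count (fun a => a.2 == r) arcs.

Definition crossings : nat :=
  \sum_(a <- arcs) \sum_(b <- arcs)
      [&& b.1 < a.1, a.2 < b.1 & b.2 < a.2]
  + \sum_(a <- arcs) \sum_(r <- rows beta | (r < a.1) && (a.2 < r)) poles r.

End Tab.

(* Main.v *)
Require Import Defs.
From mathcomp Require Import all_boot all_algebra.
From mathcomp Require Import zify.
Import GRing.Theory Num.Theory.

Lemma nth_le_max (s : seq nat) i : nth 0 s i <= foldr maxn 0 s.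
Proof.
elim: s i => [|x s IH] [|i] //=; first by rewrite leq_maxl.
by apply: leq_trans (IH i) (leq_maxr _ _).
Qed.

Lemma skew_row beta gamma m c : in_skew beta gamma m c -> m \in rows beta.
Proof.
case/and3P=> c0 gm mb; rewrite mem_iota; apply/andP; split.
  by apply: leq_ltn_trans gm.
rewrite add1n ltnS; apply: leq_trans mb _; exact: nth_le_max.
Qed.

Lemma memB beta gamma p : p \in skew_boxes beta gamma -> in_skew beta gamma p.1 p.2.
Proof. by rewrite mem_filter => /andP[]. Qed.

Lemma rowsumQ beta gamma (Q : pred nat) (P : nat -> nat -> bool) :
  \sum_(k <- rows beta | Q k) count (fun c => in_skew beta gamma k c && P k c) (cols beta)
  = count (fun p => Q p.1 && P p.1 p.2) (skew_boxes beta gamma).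
Proof.
rewrite /skew_boxes count_filter.
elim: (rows beta) => [|k rs IH]; first by rewrite big_nil.
rewrite big_cons /= count_cat IH count_map.
case Qk: (Q k) => /=.
  by congr (_ + _); apply: eq_count => c /=; rewrite Qk andbC.
by rewrite [count (preim _ _) _](eq_count (a2 := pred0)) ?count_pred0 // => c /=; rewrite Qk.
Qed.

Lemma sum_bool (T : Type) (s : seq T) (a : pred T) :
  \sum_(x <- s) (a x : nat) = count a s.
Proof. by elim: s => [|x s IH]; rewrite ?big_nil ?big_cons ?IH. Qed.

Lemma rowcount beta gamma m (P : nat -> bool) :
  count (fun c => in_skew beta gamma m c && P c) (cols beta)
  = count (fun p => (p.1 == m) && P p.2) (skew_boxes beta gamma).
Proof.
rewrite -(rowsumQ beta gamma predT (fun k c => (k == m) && P c)).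
set X := count _ _.
rewrite (eq_bigr (fun k => (k == m) * X)); last first.
  move=> k _; case: eqP => [->|_]; first by rewrite mul1n.
  by rewrite mul0n (eq_count (a2 := pred0)) ?count_pred0 // => c /=; rewrite andbF.
rewrite -big_distrl /= sum_bool.
case: (boolP (m \in rows beta)) => Hm.
  by rewrite (count_uniq_mem m (iota_uniq 1 (nrows beta))) Hm mul1n.
suff -> : X = 0 by rewrite muln0.
rewrite /X (eq_count (a2 := pred0)) ?count_pred0 // => c /=.
apply/negP => /andP[/skew_row H _]; by rewrite H in Hm.
Qed.

Lemma count_split (X : Type) (a b c : pred X) (s : seq X) :
  (forall x, (a x : nat) = b x + c x) -> count a s = count b s + count c s.
Proof.
move=> H; elim: s => [|x s IH] //=; rewrite IH H; lia.
Qed.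

Lemma two_le_split j e : 0 < j ->
  (is_two_le j e : nat) = is_two_le j.-1 e + is_two_with j e.
Proof.
move=> j0; case: e => [|i] //=.
case: (leqP i j.-1) => h1; case: (eqVneq i j) => h2; case: (leqP i j) => h3 //=; lia.
Qed.

Lemma bbar_split beta gamma T j k : 0 < j ->
  bbar beta gamma T j k = bbar beta gamma T j.-1 k +
    count (fun c => in_skew beta gamma k c && is_two_with j (T k c)) (cols beta).
Proof.
move=> j0; rewrite /bbar -!addnA; congr (_ + (_ + _)).
apply: count_split => c; case: (in_skew _ _ _ _) => //=; exact: two_le_split.
Qed.

Lemma cnt0 beta gamma T k :
  (forall m c r, in_skew beta gamma m c -> T m c = KTwo r -> 1 <= r <= m.-1) ->
  count (fun c => in_skew beta gamma k c && is_two_le 0 (T k c)) (cols beta) = 0.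
Proof.
move=> Ha; rewrite (eq_count (a2 := pred0)) ?count_pred0 // => c /=.
case Hs: (in_skew _ _ _ _) => //=; case Te: (T k c) => [|r] //=.
by have := Ha _ _ _ Hs Te; case: r {Te}.
Qed.

Lemma bbar_zbar beta gamma T j k :
  (forall m c r, in_skew beta gamma m c -> T m c = KTwo r -> 1 <= r <= m.-1) ->
  bbar beta gamma T j k = zbar beta gamma T k +
    count (fun c => in_skew beta gamma k c && is_two_le j (T k c)) (cols beta).
Proof. by move=> Ha; rewrite /zbar /bbar (cnt0 _ _ _ _ Ha) addn0. Qed.

Lemma zbar_eq beta gamma T k :
  (forall m c r, in_skew beta gamma m c -> T m c = KTwo r -> 1 <= r <= m.-1) ->
  zbar beta gamma T k = rowlen gamma k + ones_row beta gamma T k.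
Proof. by move=> Ha; rewrite /zbar /bbar (cnt0 _ _ _ _ Ha) addn0. Qed.

Lemma size_b_split beta gamma T j : 0 < j ->
  size_b beta gamma T j = size_b beta gamma T j.-1 +
    count (fun p => is_two_with j (T p.1 p.2)) (skew_boxes beta gamma).
Proof.
move=> j0; rewrite /size_b (eq_bigr _ (fun k _ => bbar_split beta gamma T j k j0)).
rewrite big_split /=; congr (_ + _).
rewrite (rowsumQ beta gamma predT (fun k c => is_two_with j (T k c))).
exact: eq_count.
Qed.

Lemma count_arcs beta gamma T (a : pred (nat * nat)) :
  count a (arcs beta gamma T) =
  count (fun p => is_two (T p.1 p.2) && a (p.1, two_sub (T p.1 p.2))) (skew_boxes beta gamma).
Proof. by rewrite /arcs count_map count_filter; apply: eq_count => p /=; rewrite andbC. Qed.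

Lemma poles_eq beta gamma T j :
  poles beta gamma T j = ones_row beta gamma T j -
    count (fun p => is_two_with j (T p.1 p.2)) (skew_boxes beta gamma).
Proof.
rewrite /poles count_arcs; congr (_ - _); apply: eq_count => p /=.
by case: (T p.1 p.2).
Qed.

Lemma sumz (I : Type) (s : seq I) (P : pred I) (F : I -> nat) :
  (\sum_(i <- s | P i) (F i)%:Z)%R = Posz (\sum_(i <- s | P i) F i).
Proof. by rewrite (big_morph Posz PoszD (erefl _)). Qed.

Lemma count_mul (X : Type) (a : pred X) (s : seq X) x :
  count a s * x = \sum_(p <- s) (a p * x).
Proof. elim: s => [|y s IH]; rewrite ?big_nil ?big_cons //= mulnDl IH //. Qed.

Lemma xPi_nat beta gamma T : is_Klein beta gamma T ->
  xPi beta gamma T = Posz (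
   \sum_(j <- rows beta) poles beta gamma T j *
      count (fun p => (j < p.1) && is_two_le j.-1 (T p.1 p.2)) (skew_boxes beta gamma)
  + \sum_(j <- rows beta) \sum_(l <- rows beta | j < l)
      count (fun p => (p.1 == l.+1) && is_two_with j (T p.1 p.2)) (skew_boxes beta gamma) *
      count (fun p => (j < p.1 < l.+1) && is_two_le j.-1 (T p.1 p.2)) (skew_boxes beta gamma)).
Proof.
case=> _ Ha _ Hc.
rewrite /xPi PoszD; congr (_ + _)%R.
  rewrite -sumz; apply: eq_big_seq => j; rewrite mem_iota => /andP[j1 _].
  have j0 : 0 < j by lia.
  rewrite PoszM; congr (_ * _)%R.
    rewrite (size_b_split _ _ _ _ j0) (zbar_eq _ _ _ _ Ha) poles_eq PoszD -subzn ?Hc //.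
    rewrite PoszD; lia.
  rewrite -(rowsumQ beta gamma (fun k => j < k) (fun k c => is_two_le j.-1 (T k c))) -sumz.
  apply: eq_bigr => k _; rewrite (bbar_zbar _ _ _ j.-1 k Ha) PoszD; lia.
rewrite -sumz; apply: eq_big_seq => j; rewrite mem_iota => /andP[j1 _].
have j0 : 0 < j by lia.
rewrite -sumz; apply: eq_bigr => l _.
rewrite PoszM; congr (_ * _)%R.
  rewrite (bbar_split _ _ _ _ _ j0) PoszD rowcount.
  have -> : count (fun p => (p.1 == l.+1) && is_two_with j (T l.+1 p.2)) (skew_boxes beta gamma)
      = count (fun p => (p.1 == l.+1) && is_two_with j (T p.1 p.2)) (skew_boxes beta gamma).
    by apply: eq_count => p /=; case: eqP => // ->.
  lia.
rewrite -(rowsumQ beta gamma (fun k => j < k < l.+1) (fun k c => is_two_le j.-1 (T k c))) -sumz.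
apply: eq_bigr => k _; rewrite (bbar_zbar _ _ _ j.-1 k Ha) PoszD; lia.
Qed.

Lemma X2_eq beta gamma T :
  \sum_(a <- arcs beta gamma T) \sum_(r <- rows beta | (r < a.1) && (a.2 < r)) poles beta gamma T r
  = \sum_(j <- rows beta) poles beta gamma T j *
      count (fun p => (j < p.1) && is_two_le j.-1 (T p.1 p.2)) (skew_boxes beta gamma).
Proof.
rewrite (exchange_big_dep predT) //=.
apply: eq_big_seq => j; rewrite mem_iota => /andP[j1 _].
rewrite big_const_seq iter_addn_0 count_arcs; congr (_ * _).
apply: eq_count => p /=; case: (T p.1 p.2) => [|i] //=.
  by rewrite andbF.
by have -> : (i <= j.-1) = (i < j) by lia.
Qed.

Lemma X1_eq beta gamma T :
  (forall m c r, in_skew beta gamma m c -> T m c = KTwo r -> 1 <= r <= m.-1) ->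
  \sum_(a <- arcs beta gamma T) \sum_(b <- arcs beta gamma T)
      [&& b.1 < a.1, a.2 < b.1 & b.2 < a.2]
  = \sum_(j <- rows beta) \sum_(l <- rows beta | j < l)
      count (fun p => (p.1 == l.+1) && is_two_with j (T p.1 p.2)) (skew_boxes beta gamma) *
      count (fun p => (j < p.1 < l.+1) && is_two_le j.-1 (T p.1 p.2)) (skew_boxes beta gamma).
Proof.
move=> Ha.
symmetry.
under eq_bigr => j _ do under eq_bigr => l _ do rewrite count_mul.
under eq_bigr => j _ do rewrite exchange_big.
rewrite exchange_big; symmetry.
under eq_bigr => a _ do rewrite sum_bool count_arcs.
rewrite /arcs big_map big_filter big_mkcond.
apply: eq_big_seq => p pB /=.
have Hs := memB _ _ _ pB.
have pR := skew_row _ _ _ _ Hs.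
case Te: (T p.1 p.2) => [|r] /=.
  by apply/esym/big1 => j _; apply: big1 => l _; rewrite andbF.
have := Ha _ _ _ Hs Te => /andP[r1 rm].
have rR : r \in rows beta by move: pR; rewrite !mem_iota; lia.
rewrite (bigD1_seq r) //= ?iota_uniq //.
rewrite [X in _ + X]big1_seq ?addn0; last first.
  by move=> j /andP[jr _]; rewrite big1_seq // => l _; rewrite [r == j]eq_sym (negbTE jr) andbF.
under eq_bigr => i _ do rewrite eqxx andbT.
have -> : count (fun q => [&& is_two (T q.1 q.2), q.1 < p.1, r < q.1
       & two_sub (T q.1 q.2) < r]) (skew_boxes beta gamma)
  = count (fun q => (r < q.1 < p.1) && is_two_le r.-1 (T q.1 q.2)) (skew_boxes beta gamma).
  apply: eq_count => q /=; case: (T q.1 q.2) => [|i] /=; first by rewrite andbF.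
  move=> /=.
  have -> : (i <= r.-1) = (i < r) by lia.
  by case: (q.1 < p.1); case: (r < q.1).
case: (ltnP r.+1 p.1) => hr.
  have lR : p.1.-1 \in rows beta by move: pR; rewrite !mem_iota; lia.
  rewrite (big_mkcond (fun i => r < i)) (bigD1_seq p.1.-1) ?iota_uniq //=.
  have -> : r < p.1.-1 by lia.
  have -> : p.1.-1.+1 = p.1 by lia.
  rewrite eqxx mul1n big1_seq ?addn0 // => l /andP[lp _].
  case: ifP => // rl.
  have -> : (p.1 == l.+1) = false by apply/negbTE; move: lp; apply: contra => /eqP ->.
  by [].
rewrite big1_seq.
  apply/eqP; rewrite eqn0Ngt -has_count; apply/hasPn => q _ /=; apply/negP => /andP[/andP[h1 h2] _]; have := leq_ltn_trans h1 h2; by rewrite ltnNge hr.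
move=> l /andP[rl _].
have -> : (p.1 == l.+1) = false by apply/negbTE/eqP; lia.
by [].
Qed.

Theorem lemma2p3 (beta gamma : seq nat) (T : nat -> nat -> kentry) :
  is_Klein beta gamma T ->
  xPi beta gamma T = Posz (crossings beta gamma T).
Proof.
move=> HK; have Ha : forall m c r, in_skew beta gamma m c -> T m c = KTwo r -> 1 <= r <= m.-1.
  by case: HK.
rewrite (xPi_nat _ _ _ HK) /crossings X2_eq (X1_eq _ _ _ Ha).
by rewrite addnC.
Qed.
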